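(* Let $\xi$ be an integrable random variable, $M\in\mathcal M$, $I\in\mathcal N$ and $t\ge0$ (resp. $t>0$ for the second identity). Then, under the convention $0/0:=0$, almost surely $$\mathbb I^M_t\,\mathbb E[\xi\mid\mathcal G_t\vee\sigma(R_I)]=\mathbb I^M_t\,\frac{\mathbb E_{M,R_I}[\xi\,\mathbb I^M_t]}{\mathbb E_{M,R_I}[\mathbb I^M_t]},\qquad \mathbb I^M_{t-}\,\mathbb E[\xi\mid\mathcal G^-_t\vee\sigma(R_I)]=\mathbb I^M_{t-}\,\frac{\mathbb E_{M,R_I}[\xi\,\mathbb I^M_{t-}]}{\mathbb E_{M,R_I}[\mathbb I^M_{t-}]}.$$ (For $I=\emptyset$, $\sigma(R_I)$ is the trivial $\sigma$-algebra.)
   Context: Standing framework. Let $(\Omega,\mathcal A,P)$ be a complete probability space where $\Omega$ is a Polish space and $\mathcal A$ its Borel $\sigma$-algebra; let $\mathcal Z\subset\mathcal A$ denote the family of $P$-null sets. Let $E$ be a separable complete metric space with Borel $\sigma$-algebra $\mathcal E$. Let $T_i:\Omega\to[0,\infty]$ and $Z_i:\Omega\to E$, $i\in\mathbb N$, be random variables such that for every $i\in\mathbb N$: $Z_{2i-1}=Z_{2i}$, $T_{2i-1}\le T_{2i}$, and $T_{2i-1}<T_{2i}$ on $\{T_{2i}<\infty\}$. Assume $\mathbb E[\sum_{i=1}^\infty\mathbf 1_{\{T_i\le t\}}]<\infty$ for all $t\ge0$. Let $\mathcal N$ be the set of finite subsets of $\mathbb N$ and $\mathcal M$ the set of finite subsets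 of $\{1,3,5,\dots\}$. For $I\in\mathcal N$ let $E_I=E^{|I|}$, $\mathcal E_I=\mathcal B(E_I)$, $Z_I=(Z_i)_{i\in I}$, and define the random counting measure $\mu_I$ on $[0,\infty)\times E_I$ by $\mu_I([0,t]\times B)=\mathbf 1_{\{t\ge T_i=T_j\ \forall i,j\in I\}\cap\{T_i\neq T_j\ \forall i\in I,\,j\notin I\}}\mathbf 1_{\{Z_I\in B\}}$, $t\ge0$, $B\in\mathcal E_I$. Let $Q_I=\sup\{t\ge0:\mu_I([0,t]\times E_I)=0\}$ and $R_I=(Q_I,Z_I)$. Information: $\mathcal G_t=\sigma\big(\{T_{2i-1}\le t<T_{2i}\}\cap\{Z_{2i}\in B\}:B\in\mathcal E,i\in\mathbb N\big)\vee\mathcal Z$ ($t\ge0$), $\mathcal G^-_t=\sigma\big(\{T_{2i-1}< t\le T_{2i}\}\cap\{Z_{2i}\in B\}:B\in\mathcal E,i\in\mathbb N\big)\vee\mathcal Z$ ($t>0$). For $M\in\mathcal M$: $A^M_t=\bigcap_{i\in M}\{T_i\le t<T_{i+1}\}\cap\bigcap_{i\text{ odd},\,i\notin M}(\Omega\setminus\{T_i\le t<T_{i+1}\})$, $A^M_{t-}$ defined in the same way with $\{T_i<t\le T_{i+1}\}$ in place of $\{T_i\le t<T_{i+1}\}$, $\mathbb I^M_t=\mathbf 1_{A^M_t}$, $\mathbb I^M_{t-}=\mathbf 1_{A^M_{t-}}$. Conditional distributions: for $M\in\mathcal M$, $I\in\mathcal N$, $P_{M,R_I}$ is a fixed regular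 version of $P(\cdot\mid Z_M,R_I)$ and $\mathbb E_{M,R_I}[\xi]=\int\xi\,dP_{M,R_I}$; $P_M:=P_{M,R_\emptyset}$ (a version of $P(\cdot\mid Z_M)$) and $\mathbb E_M$ its expectation. *)

(* Defs.v *)
From HB Require Import structures.
From mathcomp Require Import all_boot all_order all_algebra finmap.
From mathcomp Require Import all_classical all_reals all_analysis measurable_realfun.
Import Order.TTheory GRing.Theory Num.Theory.

Set Implicit Arguments.
Unset Strict Implicit.
Unset Printing Implicit Defensive.

Local Open Scope classical_set_scope.
Local Open Scope ring_scope.

(* Indices: the paper's index set N = {1,2,...} is represented by the
   positive naturals; index 0 of the families T, Z is never used.
   The pair (2i-1, 2i), i >= 1, is written ((2*k).+1, (2*k).+2), k = i-1. *)

Definition gen_sigma (T : Type) (G : set (set T)) : set (set T) :=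
  smallest (sigma_algebra setT) G.

Definition null_sets d (Omega : measurableType d) (R : realType)
  (P : probability Omega R) : set (set Omega) :=
  [set A | measurable A /\ P A = 0%E].

Definition preimages d' (Omega : Type) (U : measurableType d')
  (X : Omega -> U) : set (set Omega) :=
  [set A | exists2 B, measurable B & A = X @^-1` B].

Section Model.
Context (d dE : measure_display) (Omega : measurableType d) (R : realType)
  (E : measurableType dE) (T : nat -> Omega -> \bar R) (Z : nat -> Omega -> E).

(* generators of G_t (without the null sets) *)
Definition G_gens (t : R) : set (set Omega) :=
  [set A | exists k (B : set E), measurable B /\
     A = [set w | (T (2*k).+1 w <= t%:E < T (2*k).+2 w)%E /\ B (Z (2*k).+2 w)]].

(* generators of G^-_t (without the null sets) *)
Definition Gm_gens (t : R) : set (set Omega) :=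
  [set A | exists k (B : set E), measurable B /\
     A = [set w | (T (2*k).+1 w < t%:E <= T (2*k).+2 w)%E /\ B (Z (2*k).+2 w)]].

(* mu_I([0,t] x E_I)(w) = 1 *)
Definition mu_mass_event (I : {fset nat}) (t : R) : set Omega :=
  [set w | (forall i, i \in I -> (T i w <= t%:E)%E) /\
           (forall i j, i \in I -> j \in I -> T i w = T j w) /\
           (forall i j, i \in I -> (0 < j)%N -> j \notin I -> T i w <> T j w)].

(* Q_I = sup{t >= 0 : mu_I([0,t] x E_I) = 0}, supremum taken in [0,+oo]
   (so that sup of the empty set is 0) *)
Definition Q_ (I : {fset nat}) (w : Omega) : \bar R :=
  ereal_sup ([set 0%E] `|`
             [set t%:E | t in [set t : R | 0 <= t /\ ~ mu_mass_event I t w]]).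

(* generators of sigma(R_I) = sigma(Q_I, Z_I) *)
Definition RI_gens (I : {fset nat}) : set (set Omega) :=
  preimages (Q_ I) `|`
  [set A | exists i, i \in I /\ preimages (Z i) A].

Definition ZM_gens (M : {fset nat}) : set (set Omega) :=
  [set A | exists i, i \in M /\ preimages (Z i) A].

Definition A_ (M : {fset nat}) (t : R) : set Omega :=
  [set w | (forall i, i \in M -> (T i w <= t%:E < T i.+1 w)%E) /\
           (forall i, odd i -> i \notin M -> ~ (T i w <= t%:E < T i.+1 w)%E)].

Definition Am_ (M : {fset nat}) (t : R) : set Omega :=
  [set w | (forall i, i \in M -> (T i w < t%:E <= T i.+1 w)%E) /\
           (forall i, odd i -> i \notin M -> ~ (T i w < t%:E <= T i.+1 w)%E)].

End Model.

Definition GRI d dE (Omega : measurableType d) (R : realType)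
  (E : measurableType dE) (P : probability Omega R)
  (T : nat -> Omega -> \bar R) (Z : nat -> Omega -> E) (I : {fset nat}) (t : R) :=
  gen_sigma (G_gens T Z t `|` null_sets P `|` RI_gens T Z I).

Definition GmRI d dE (Omega : measurableType d) (R : realType)
  (E : measurableType dE) (P : probability Omega R)
  (T : nat -> Omega -> \bar R) (Z : nat -> Omega -> E) (I : {fset nat}) (t : R) :=
  gen_sigma (Gm_gens T Z t `|` null_sets P `|` RI_gens T Z I).

Definition ZMRI d dE (Omega : measurableType d) (R : realType)
  (E : measurableType dE)
  (T : nat -> Omega -> \bar R) (Z : nat -> Omega -> E) (M I : {fset nat}) :=
  gen_sigma (ZM_gens Z M `|` RI_gens T Z I).

Definition regular_cond_prob d (Omega : measurableType d) (R : realType)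
  (P : probability Omega R) (H : set (set Omega))
  (kappa : Omega -> probability Omega R) : Prop :=
  (forall A, measurable A -> forall B : set (\bar R), measurable B ->
      H ((fun w => kappa w A) @^-1` B)) /\
  (forall A, measurable A -> forall B, H B ->
      (\int[P]_(w in B) kappa w A = P (A `&` B))%E).

Definition cond_exp_version d (Omega : measurableType d) (R : realType)
  (P : probability Omega R) (G : set (set Omega)) (xi Y : Omega -> R) : Prop :=
  (forall B : set R, measurable B -> G (Y @^-1` B)) /\
  P.-integrable setT (EFin \o Y) /\
  (forall A, G A -> (\int[P]_(w in A) (Y w)%:E = \int[P]_(w in A) (xi w)%:E)%E).

(* a / b with the convention 0/0 := 0 (b is a finite number in [0,1] here) *)
Definition ediv0 (R : realType) (a b : \bar R) : \bar R :=
  if b == 0%E then 0%E else (a * ((fine b)^-1)%:E)%E.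

(* Main.v *)
Require Import Defs.
From HB Require Import structures.
From mathcomp Require Import all_boot all_order all_algebra finmap.
From mathcomp Require Import all_classical all_reals all_analysis measurable_realfun.
Import Order.TTheory GRing.Theory Num.Theory.
Local Open Scope classical_set_scope.
Local Open Scope ring_scope.
Set Implicit Arguments. Unset Strict Implicit.

Section Qmeas.
Local Open Scope ereal_scope.
Context d (Omega : measurableType d) (R : realType) dE (E : measurableType dE)
  (T : nat -> Omega -> \bar R) (Z : nat -> Omega -> E).
Hypothesis mT : forall i, measurable_fun setT (T i).

Definition C1 (I : {fset nat}) w := forall i j, i \in I -> j \in I -> T i w = T j w.
Definition C2 (I : {fset nat}) w :=
  forall i j, i \in I -> (0 < j)%N -> j \notin I -> T i w <> T j w.

Lemma Q_gt (I : {fset nat}) (x : R) w : (x%:E < Q_ T I w) <->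
  ((x < 0)%R \/ ~ C1 I w \/ ~ C2 I w \/ exists2 i, i \in I & x%:E < T i w).
Proof.
split.
  move/ereal_sup_gt => [e [->|[t [t0 nev] <-]] xe].
    by left; rewrite -lte_fin.
  apply: contrapT => hn; apply: nev.
  have c1 : C1 I w by apply: contrapT => h; apply: hn; right; left.
  have c2 : C2 I w by apply: contrapT => h; apply: hn; right; right; left.
  split; last by split.
  move=> i iI; rewrite leNgt; apply/negP => lt; apply: hn; right; right; right.
  by exists i => //; exact: lt_trans xe lt.
have [x0|x0] := ltP x 0%R.
  move=> _; apply: (lt_le_trans _ (ereal_sup_ubound _)); last by left.
  by rewrite lte_fin.
have big (t : R) : (x < t)%R -> ~ mu_mass_event T I t w -> x%:E < Q_ T I w.
  move=> xt nev; apply: (lt_le_trans _ (ereal_sup_ubound _)); last first.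
    by right; exists t => //; split => //; rewrite (le_trans x0)// ltW.
  by rewrite lte_fin.
move=> [x0'|[h|[h|[i iI xT]]]]; first by [].
- by apply: (big (x + 1)%R); [rewrite ltrDl | move=> [_ [h' _]]].
- by apply: (big (x + 1)%R); [rewrite ltrDl | move=> [_ [_ h']]].
move: xT; case Ey: (T i w) => [y| |] xT.
- apply: (big ((x + y) / 2)%R); first by rewrite (midf_lt _).1 // -lte_fin.
  move=> [h _]; have := h i iI; rewrite Ey lee_fin leNgt.
  by rewrite (midf_lt _).2 // -lte_fin.
- apply: (big (x + 1)%R); first by rewrite ltrDl.
  by move=> [h _]; have := h i iI; rewrite Ey leNgt ltry.
- by [].
Qed.


Lemma meq i j : measurable [set w | T i w = T j w].
Proof.
have := measurable_lee measurableT (mT i) (mT j).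
have := measurable_lee measurableT (mT j) (mT i).
rewrite !setTI => m1 m2.
rewrite (_ : [set w | _] = [set w | T i w <= T j w] `&` [set w | T j w <= T i w]).
  exact: measurableI.
apply/seteqP; split => w /=; first by move=> ->.
by move=> [h1 h2]; apply/eqP; rewrite eq_le h1 h2.
Qed.

Lemma mC1 I : measurable [set w | C1 I w].
Proof.
rewrite (_ : [set w | _] = \bigcap_(i in [set i | i \in I])
   \bigcap_(j in [set j | j \in I]) [set w | T i w = T j w]).
  by apply: bigcap_measurableType => i _; apply: bigcap_measurableType => j _; exact: meq.
apply/seteqP; split => w /=.
  by move=> h i iI j jI; exact: h.
by move=> h i j iI jI; exact: h.
Qed.

Lemma mC2 I : measurable [set w | C2 I w].
Proof.
rewrite (_ : [set w | _] = \bigcap_(i in [set i | i \in I])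
   \bigcap_(j in [set j | (0 < j)%N /\ j \notin I]) ~` [set w | T i w = T j w]).
  apply: bigcap_measurableType => i _; apply: bigcap_measurableType => j _.
  exact/measurableC/meq.
apply/seteqP; split => w /=.
  by move=> h i iI j [j0 jI]; exact: h.
by move=> h i j iI j0 jI; exact: (h i iI j (conj j0 jI)).
Qed.

Lemma mQ I : measurable_fun setT (Q_ T I).
Proof.
apply: (measurability _ (ErealGenOInfty.measurableE R)) => // _ [_ [x ->] <-].
rewrite (_ : _ `&` _ = [set w | (x < 0)%R] `|` ~` [set w | C1 I w] `|`
   ~` [set w | C2 I w] `|` \bigcup_(i in [set i | i \in I]) [set w | x%:E < T i w]).
  apply: measurableU; last first.
    apply: bigcup_measurable => i _.
    by have := emeasurable_fun_o_infty measurableT (mT i) x%:E; rewrite setTI.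
  apply: measurableU; last exact/measurableC/mC2.
  apply: measurableU; last exact/measurableC/mC1.
  case: (boolP (x < 0)%R) => h.
    by rewrite (_ : [set w | _] = setT) //; apply/seteqP; split.
  by rewrite (_ : [set w | _] = set0) //; apply/seteqP; split => // w /= /negP.
apply/seteqP; split => w.
  rewrite /= in_itv /= andbT => -[_ /(Q_gt I x w) [h|[h|[h|[i iI h]]]]].
  - by left; left; left.
  - by left; left; right.
  - by left; right.
  - by right; exists i.
rewrite /= in_itv /= andbT => h; split => //; apply/(Q_gt I x w).
case: h => [[[h|h]|h]|[i iI h]].
- by left.
- by right; left.
- by right; right; left.
- by right; right; right; exists i.
Qed.
End Qmeas.

Section aux.
Local Open Scope ereal_scope.
Context d (Omega : measurableType d) (R : realType) (P : probability Omega R).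

Lemma int_symdiff (S1 S2 : set Omega) (f : Omega -> \bar R) :
  measurable S1 -> measurable S2 -> P.-integrable setT f ->
  P.-negligible ((S1 `\` S2) `|` (S2 `\` S1)) ->
  \int[P]_(x in S1) f x = \int[P]_(x in S2) f x.
Proof.
move=> mS1 mS2 fi [N [mN N0 sub]].
rewrite (negligible_integral mN mS1 _ N0); last exact: integrableS fi.
rewrite (negligible_integral mN mS2 _ N0); last exact: integrableS fi.
congr integral; apply/seteqP; split => x [Sx Nx]; split => //.
- by apply: contrapT => S2x; apply: Nx; apply: sub; left.
- by apply: contrapT => S1x; apply: Nx; apply: sub; right.
Qed.

Lemma meas_symdiff (S1 S2 : set Omega) :
  measurable S1 -> measurable S2 ->
  P.-negligible ((S1 `\` S2) `|` (S2 `\` S1)) -> P S1 = P S2.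
Proof.
move=> mS1 mS2 ng.
have := @int_symdiff S1 S2 (cst 1) mS1 mS2 _ ng.
rewrite !integral_cst// !mul1e; apply.
exact: (finite_measure_integrable_cst P 1 measurableT).
Qed.

Lemma pos_int0 (S : set Omega) (f : Omega -> \bar R) : measurable S ->
  measurable_fun S f -> (forall x, S x -> 0 < f x) ->
  \int[P]_(x in S) f x = 0 -> P.-negligible S.
Proof.
move=> mS mf f0 i0.
have : \int[P]_(x in S) `|f x| = 0.
  rewrite -{}i0; apply: eq_integral => x /[!inE] Sx.
  by rewrite gee0_abs// ltW// f0.
move/(ae_eq_integral_abs P mS mf) => [N [mN N0 sub]].
exists N; split => // x Sx; apply: sub => /= /(_ Sx) fx0.
by move: (f0 x Sx); rewrite fx0 ltxx.
Qed.
End aux.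

Section core.
Local Open Scope ereal_scope.
Context d (Omega : measurableType d) (R : realType) (P : probability Omega R).
Variables (Hg : set (set Omega)) (kappa : Omega -> probability Omega R).
Hypothesis HgM : forall C, Hg C -> measurable C.
Hypothesis Hkappa : regular_cond_prob P (<<s Hg>>) kappa.

Let X := g_sigma_algebraType Hg.

Lemma sHM C : <<s Hg>> C -> measurable C.
Proof.
move=> HC; apply: (smallest_sub _ _ HC) => //; exact: sigma_algebra_measurable.
Qed.

Lemma toOmega (f : Omega -> \bar R) :
  measurable_fun (setT : set X) (f : X -> \bar R) -> measurable_fun setT f.
Proof.
move=> mf _ B mB; rewrite setTI; apply: sHM.
by have := mf measurableT B mB; rewrite setTI.
Qed.

Lemma K1 (g : Omega -> \bar R) : (forall x, 0 <= g x) -> measurable_fun setT g ->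
  measurable_fun (setT : set X) (fun w : X => \int[kappa w]_x g x).
Proof.
move=> g0 mg.
apply: (@measurable_fun_integral_kernel _ _ X Omega R (fun w : X => kappa w : {measure set Omega -> \bar R})) => //.
move=> U mU _ B mB; rewrite setTI.
exact: Hkappa.1.
Qed.

Lemma mkappa U : measurable U -> measurable_fun setT (fun w => kappa w U).
Proof.
move=> mU; apply: toOmega => _ B mB; rewrite setTI; exact: Hkappa.1.
Qed.

Import HBNNSimple.

Lemma K2_nnsfun (f : {nnsfun Omega >-> R}) C : <<s Hg>> C ->
  \int[P]_(w in C) \int[kappa w]_x (f x)%:E = \int[P]_(x in C) (f x)%:E.
Proof.
move=> HC; have mC := sHM HC.
under eq_integral => w _ do rewrite integralT_nnsfun sintegralE.
rewrite ge0_integral_fsum//; last 2 first.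
  - move=> r; apply: measurable_funeM; apply: measurable_funS (mkappa _) => //.
  - move=> n w _.
    have := mulemu_ge0 (fun n => f @^-1` [set n]).
    by apply; exact: preimage_nnfun0.
under [in RHS]eq_integral do rewrite fimfunE -fsumEFin//.
rewrite ge0_integral_fsum//; last 2 first.
  - by move=> r; exact/measurable_EFinP/measurableT_comp.
  - by move=> r z _; rewrite EFinM nnfun_muleindic_ge0.
apply: eq_fsbigr => r _.
rewrite (integralZl_indic _ (fun r => f @^-1` [set r]))//; last first.
  exact: preimage_nnfun0.
rewrite integral_indic//.
have [r0|r0] := leP 0%R r.
  rewrite ge0_integralZl//; last first.
    by apply: measurable_funS (mkappa _) => //.
  by rewrite Hkappa.2.
rewrite integral0_eq ?mul0e; last first.
  by move=> w _; rewrite preimage_nnfun0// measure0 mule0.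
by rewrite preimage_nnfun0// set0I measure0 mule0.
Qed.

Lemma K2 (g : Omega -> \bar R) C : (forall x, 0 <= g x) -> measurable_fun setT g ->
  <<s Hg>> C ->
  \int[P]_(w in C) \int[kappa w]_x g x = \int[P]_(x in C) g x.
Proof.
move=> g0 mg HC; have mC := sHM HC.
pose g_ := nnsfun_approx measurableT mg.
have gE x : g x = limn (fun n => (g_ n x)%:E).
  by apply/esym/cvg_lim => //; exact: cvg_nnsfun_approx.
have mg_ n : measurable_fun setT (fun x => (g_ n x)%:E).
  exact/measurable_EFinP.
have g_0 n x : 0 <= (g_ n x)%:E by rewrite lee_fin.
have nd_g x : nondecreasing_seq (fun n => (g_ n x)%:E).
  by move=> a b ab; rewrite lee_fin; exact/lefP/nd_nnsfun_approx.
transitivity (\int[P]_(w in C) limn (fun n => \int[kappa w]_x (g_ n x)%:E)).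
  apply: eq_integral => w _.
  rewrite -monotone_convergence//.
  by apply: eq_integral => x _; rewrite gE.
rewrite monotone_convergence//; last 3 first.
  - move=> n; apply: measurable_funS (toOmega (K1 _ _)) => //.
  - by move=> n w _; exact: integral_ge0.
  - by move=> w _ a b ab; apply: ge0_le_integral => // x _; exact: nd_g.
under eq_fun do rewrite K2_nnsfun//.
rewrite -monotone_convergence//.
  by apply: eq_integral => x _; rewrite gE.
all: try by move=> n; exact: measurable_funS (mg_ n).
all: try by move=> x _; exact: nd_g.
Qed.

Variables (Gs : set (set Omega)) (A : set Omega).
Hypothesis GsM : forall D, Gs D -> measurable D.
Hypothesis GsI : forall D1 D2, Gs D1 -> Gs D2 -> Gs (D1 `&` D2).
Hypothesis GsA : Gs A.
Hypothesis HA : forall C, <<s Hg>> C -> Gs (C `&` A).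
Hypothesis GA : forall D, Gs D -> exists2 C, <<s Hg>> C &
  P.-negligible (((D `&` A) `\` C) `|` ((C `&` A) `\` D)).

Lemma mkappaX U : measurable U -> measurable_fun (setT : set X) (fun w => kappa w U).
Proof. by move=> mU _ B mB; rewrite setTI; exact: Hkappa.1. Qed.

Lemma OS (xi Y : Omega -> R) (xint : P.-integrable setT (EFin \o xi))
 (Yint : P.-integrable setT (EFin \o Y))
 (YG : forall q : R, Gs [set w | (q < Y w)%R])
 (Ye : forall D, Gs D -> \int[P]_(w in D) (Y w)%:E = \int[P]_(w in D) (xi w)%:E)
 (Fp Fn : Omega -> \bar R) (Fp0 : forall w, 0 <= Fp w) (Fn0 : forall w, 0 <= Fn w)
 (mFp : measurable_fun (setT : set X) (Fp : X -> \bar R))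
 (mFn : measurable_fun (setT : set X) (Fn : X -> \bar R))
 (eFp : forall C, <<s Hg>> C -> \int[P]_(w in C) Fp w =
     \int[P]_(w in C) (fun x => (xi x * \1_A x)%:E)^\+ w)
 (eFn : forall C, <<s Hg>> C -> \int[P]_(w in C) Fn w =
     \int[P]_(w in C) (fun x => (xi x * \1_A x)%:E)^\- w)
 (q : R) :
 P.-negligible [set w | A w /\ (q < Y w)%R /\ Fp w < +oo /\ Fn w < +oo /\
    0 < kappa w A /\ Fp w - Fn w < q%:E * kappa w A].
Proof.
pose g := fun x => (xi x * \1_A x)%:E.
have mA : measurable A := GsM GsA.
have mK := mkappaX mA.
have mlt (f1 f2 : X -> \bar R) : measurable_fun setT f1 -> measurable_fun setT f2 ->
    <<s Hg>> [set w | f1 w < f2 w].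
  by move=> m1 m2; have := measurable_lte measurableT m1 m2; rewrite setTI.
pose Cq := [set w : Omega | Fp w < +oo] `&` [set w | Fn w < +oo] `&`
   [set w | 0 < kappa w A] `&` [set w | Fp w - Fn w < q%:E * kappa w A].
have HCq : <<s Hg>> Cq.
  apply: (@measurableI _ X); [apply: (@measurableI _ X); [apply: (@measurableI _ X)|]|].
  - exact: mlt.
  - exact: mlt.
  - exact: mlt.
  - apply: mlt; first exact: emeasurable_funB.
    exact: measurable_funeM.
pose S := [set w | (q < Y w)%R] `&` (Cq `&` A).
have GS : Gs S by apply: GsI => //; exact: HA.
have mS := GsM GS.
have [C HC ngC] := GA (YG q).
pose C' := C `&` Cq.
have HC' : <<s Hg>> C' by exact: (@measurableI _ X).
have mC' := sHM HC'.
have mC'A : measurable (C' `&` A) by exact: measurableI.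
have ng : P.-negligible ((S `\` (C' `&` A)) `|` ((C' `&` A) `\` S)).
  apply: negligibleS ngC => w [[[Dw [Cqw Aw]] nC]|[[[Cw Cqw] Aw] nS]].
  - by left; split => // Cw; apply: nC.
  - by right; split => // Dw; apply: nS.
have PS : P S = P (C' `&` A) := meas_symdiff mS mC'A ng.
have mxi : measurable_fun setT xi.
  by apply/measurable_EFinP; exact: (measurable_int P xint).
have mY : measurable_fun setT Y.
  by apply/measurable_EFinP; exact: (measurable_int P Yint).
have mg : measurable_fun setT g.
  by apply/measurable_EFinP; exact: measurable_funM mxi (measurable_indic mA).
have gi : P.-integrable setT g.
  apply: le_integrable xint => // x _; rewrite /g /= lee_fin normrM indicE.
  by case: (_ \in _); rewrite ?normr1 ?mulr1 ?normr0 ?mulr0.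
have intF (F : Omega -> \bar R) (h : Omega -> \bar R) : (forall w, 0 <= F w) ->
    measurable_fun (setT : set X) (F : X -> \bar R) ->
    P.-integrable setT h -> (forall w, 0 <= h w) ->
    \int[P]_(w in C') F w = \int[P]_(w in C') h w ->
    P.-integrable C' F.
  move=> F0 mF hi h0 eF; apply/integrableP; split.
    exact: measurable_funS (toOmega mF).
  have /integrableP[_ hfin] := integrableS measurableT mC' (subsetT _) hi.
  rewrite (eq_integral F); last by move=> w _; rewrite gee0_abs.
  rewrite eF; apply: le_lt_trans hfin; apply: ge0_le_integral => //.
  - by apply: measurable_funS (measurable_int P hi).
  - by apply: measurableT_comp => //; apply: measurable_funS (measurable_int P hi).
  - by move=> w _; rewrite gee0_abs.
have iFp : P.-integrable C' Fp.
  apply: (intF _ (g^\+)) => //; first exact: integrable_funepos.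
  exact: eFp.
have iFn : P.-integrable C' Fn.
  apply: (intF _ (g^\-)) => //; first exact: integrable_funeneg.
  exact: eFn.
have iK : P.-integrable C' (fun w => kappa w A).
  apply: (intF _ (EFin \o \1_A)) => //.
  - apply: le_integrable (finite_measure_integrable_cst P 1 measurableT) => //.
      exact/measurable_EFinP/measurable_indic.
    move=> x _; rewrite /= lee_fin indicE.
    by case: (_ \in _); rewrite ?normr1 ?normr0.
  - by move=> w; rewrite /= lee_fin.
  - by rewrite Hkappa.2// integral_indic// setIC.
have E1 : \int[P]_(w in S) (Y w)%:E = \int[P]_(w in C') (Fp w - Fn w).
  rewrite Ye// (int_symdiff mS mC'A xint ng).
  transitivity (\int[P]_(w in C') g w).
    rewrite integral_mkcondr; apply: eq_integral => w _.
    rewrite /g patchE indicE; case: (_ \in _) => //.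
    by rewrite mulr1.
    by rewrite mulr0.
  by rewrite [LHS]integralE -(eFp _ HC') -(eFn _ HC') integralB.
have E2 : \int[P]_(w in C') (Fp w - Fn w) <= q%:E * P S.
  apply: (@le_trans _ _ (\int[P]_(w in C') (q%:E * kappa w A))).
    apply: le_integral => //.
    - exact: integrableB.
    - exact: integrableZl.
    - by move=> w; rewrite inE => -[_ [_ Fq]]; exact: ltW.
  by rewrite (integralZl mC' iK) Hkappa.2// PS setIC.
have E3 : \int[P]_(w in S) ((Y w - q)%:E) = \int[P]_(w in S) (Y w)%:E - q%:E * P S.
  under eq_integral do rewrite EFinB.
  rewrite integralB_EFin//; last exact: finite_measure_integrable_cst.
  - by rewrite integral_cst.
  - exact: integrableS Yint.
have S0 : P.-negligible S.
  apply: (@pos_int0 _ _ _ P S (fun w => (Y w - q)%:E)) => //.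
  - apply/measurable_EFinP; apply: measurable_funB => //.
    exact: measurable_funS mY.
  - by move=> w [/= qY _]; rewrite lte_fin subr_gt0.
  apply/eqP; rewrite eq_le; apply/andP; split.
    by rewrite E3 E1 sube_le0.
  by apply: integral_ge0 => w [/= qY _]; rewrite lee_fin subr_ge0 ltW.
apply: negligibleS S0 => w [Aw [qY [Fpf [Fnf [K0 Fq]]]]].
by split => //; split => //.
Qed.

Lemma CoreT (xi Y : Omega -> R) (xint : P.-integrable setT (EFin \o xi))
  (Yce : cond_exp_version P Gs xi Y) :
  {ae P, forall w, ((\1_A w)%:E * (Y w)%:E =
     (\1_A w)%:E * @ediv0 R (\int[kappa w]_x (xi x * \1_A x)%:E)
                (\int[kappa w]_x (\1_A x)%:E))}.
Proof.
case: Yce => YGm [Yint Ye].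
have mA : measurable A := GsM GsA.
have mxi : measurable_fun setT xi.
  by apply/measurable_EFinP; exact: (measurable_int P xint).
pose g := fun x => (xi x * \1_A x)%:E.
have mg : measurable_fun setT g.
  by apply/measurable_EFinP; exact: measurable_funM mxi (measurable_indic mA).
pose Fp := fun w => \int[kappa w]_x g^\+ x.
pose Fn := fun w => \int[kappa w]_x g^\- x.
have Fp0 w : 0 <= Fp w by apply: integral_ge0 => x _; exact: funepos_ge0.
have Fn0 w : 0 <= Fn w by apply: integral_ge0 => x _; exact: funeneg_ge0.
have mFp : measurable_fun (setT : set X) (Fp : X -> \bar R).
  exact: K1 (fun x => funepos_ge0 g x) (measurable_funepos mg).
have mFn : measurable_fun (setT : set X) (Fn : X -> \bar R).
  exact: K1 (fun x => funeneg_ge0 g x) (measurable_funeneg mg).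
have eFp C : <<s Hg>> C -> \int[P]_(w in C) Fp w = \int[P]_(w in C) g^\+ w.
  move=> HC; exact: K2 (fun x => funepos_ge0 g x) (measurable_funepos mg) HC.
have eFn C : <<s Hg>> C -> \int[P]_(w in C) Fn w = \int[P]_(w in C) g^\- w.
  move=> HC; exact: K2 (fun x => funeneg_ge0 g x) (measurable_funeneg mg) HC.
have YG q : Gs [set w | (q < Y w)%R].
  have -> : [set w | (q < Y w)%R] = Y @^-1` `]q, +oo[.
    by apply/seteqP; split => w /=; rewrite in_itv /= andbT.
  exact: YGm.
have YGN q : Gs [set w | (q < - Y w)%R].
  have -> : [set w | (q < - Y w)%R] = Y @^-1` `]-oo, (- q)%R[.
    by apply/seteqP; split => w /=; rewrite in_itv /= ltrNr.
  exact: YGm.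
have N1 := @OS xi Y xint Yint YG Ye Fp Fn Fp0 Fn0 mFp mFn eFp eFn.
have xintN : P.-integrable setT (EFin \o (fun x => (- xi x)%R)) by exact: integrableN xint.
have YintN : P.-integrable setT (EFin \o (fun x => (- Y x)%R)) by exact: integrableN Yint.
have YeN D : Gs D -> \int[P]_(w in D) (- Y w)%R%:E = \int[P]_(w in D) (- xi w)%R%:E.
  move=> GD; have mD := GsM GD.
  transitivity (\int[P]_(w in D) ((-1)%R%:E * (Y w)%:E)).
    by apply: eq_integral => w _; rewrite EFinN mulN1e.
  rewrite integralZl//; last exact: integrableS Yint.
  rewrite Ye// -integralZl//; last exact: integrableS xint.
  by apply: eq_integral => w _; rewrite EFinN mulN1e.
have gN : (fun x => ((- xi x) * \1_A x)%R%:E) = \- g.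
  by apply/funext => x; rewrite /g mulNr EFinN.
have eFpN C : <<s Hg>> C -> \int[P]_(w in C) Fn w =
    \int[P]_(w in C) (fun x => ((- xi x) * \1_A x)%R%:E)^\+ w.
  by move=> HC; rewrite gN funeposN; exact: eFn.
have eFnN C : <<s Hg>> C -> \int[P]_(w in C) Fp w =
    \int[P]_(w in C) (fun x => ((- xi x) * \1_A x)%R%:E)^\- w.
  by move=> HC; rewrite gN funenegN; exact: eFp.
have N2 := @OS (fun x => (- xi x)%R) (fun x => (- Y x)%R) xintN YintN YGN YeN Fn Fp
  Fn0 Fp0 mFn mFp eFpN eFnN.
have mK := mkappaX mA.
pose Z0 := [set w : Omega | kappa w A <= 0].
have HZ0 : <<s Hg>> Z0.
  by have := measurable_lee measurableT mK (@measurable_cst _ _ X _ setT 0); rewrite setTI.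
have nN3 : P.-negligible (A `&` Z0).
  exists (A `&` Z0); split => //; first exact: measurableI (sHM HZ0).
  rewrite -Hkappa.2// integral0_eq// => w Zw.
  by apply/eqP; rewrite eq_le Zw measure_ge0.
have Fi (F : Omega -> \bar R) (h : Omega -> \bar R) : (forall w, 0 <= F w) ->
    measurable_fun (setT : set X) (F : X -> \bar R) ->
    P.-integrable setT h -> (forall w, 0 <= h w) ->
    \int[P]_(w in setT) F w = \int[P]_(w in setT) h w ->
    P.-integrable setT F.
  move=> F0 mF hi h0 eF; apply/integrableP; split; first exact: toOmega mF.
  have /integrableP[_ hfin] := hi.
  rewrite (eq_integral F); last by move=> w _; rewrite gee0_abs.
  rewrite eF; apply: le_lt_trans hfin; apply: ge0_le_integral => //.
  - exact: (measurable_int P hi).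
  - by apply: measurableT_comp => //; exact: (measurable_int P hi).
  - by move=> w _; rewrite gee0_abs.
have gi : P.-integrable setT g.
  apply: le_integrable xint => // x _; rewrite /g /= lee_fin normrM indicE.
  by case: (_ \in _); rewrite ?normr1 ?mulr1 ?normr0 ?mulr0.
have Fpi : P.-integrable setT Fp.
  apply: (Fi _ (g^\+)) => //; first exact: integrable_funepos.
  exact: eFp (@measurableT _ X).
have Fni : P.-integrable setT Fn.
  apply: (Fi _ (g^\-)) => //; first exact: integrable_funeneg.
  exact: eFn (@measurableT _ X).
have [N4 [mN4 N40 sub4]] := integrable_ae measurableT Fpi.
have [N5 [mN5 N50 sub5]] := integrable_ae measurableT Fni.
pose S1 (q : R) := [set w | A w /\ (q < Y w)%R /\ Fp w < +oo /\ Fn w < +oo /\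
    0 < kappa w A /\ Fp w - Fn w < q%:E * kappa w A].
pose S2 (q : R) := [set w | A w /\ ((- q)%R < (- Y w)%R)%R /\ Fn w < +oo /\
    Fp w < +oo /\ 0 < kappa w A /\ Fn w - Fp w < (- q)%R%:E * kappa w A].
pose Fq (o : option rat) := if o is Some r then S1 (ratr r) `|` S2 (ratr r) else set0.
pose BQ := \bigcup_n Fq (choice.unpickle n).
have nBQ : P.-negligible BQ.
  apply: negligible_bigcup => n; rewrite /Fq; case: choice.unpickle => [r|].
    by apply: negligibleU; [exact: N1|exact: N2].
  exact: negligible_set0.
have nN4 : P.-negligible N4 by exists N4; split.
have nN5 : P.-negligible N5 by exists N5; split.
apply: (negligibleS _ (negligibleU (negligibleU (negligibleU nN3 nN4) nN5) nBQ)).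
move=> w /= nQ; apply: contrapT => nin; apply: nQ.
have nZ : ~ (A w /\ Z0 w) by move=> h; apply: nin; left; left; left.
have Fpf : Fp w \is a fin_num.
  apply: contrapT => h; apply: nin; left; left; right; apply: sub4 => /(_ I).
  done.
have Fnf : Fn w \is a fin_num.
  apply: contrapT => h; apply: nin; left; right; apply: sub5 => /(_ I).
  done.
have nB r : ~ S1 (ratr r) w /\ ~ S2 (ratr r) w.
  split.
    move=> h; apply: nin; right; exists (choice.pickle r); first exact: I.
    by rewrite choice.pickleK; left.
  move=> h; apply: nin; right; exists (choice.pickle r); first exact: I.
  by rewrite choice.pickleK; right.
rewrite indicE; case: (boolP (w \in A)) => [/set_mem Aw|_]; last first.
  by rewrite !mul0e.
rewrite mul1e integral_indic// setIT.
have -> : \int[kappa w]_x (xi x * \1_A x)%:E = Fp w - Fn w by rewrite integralE.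
rewrite !mul1e.
have K0 : 0 < kappa w A.
  rewrite lt_neqAle measure_ge0 andbT; apply/negP => /eqP K0.
  by apply: nZ; split => //; rewrite /Z0 /= -K0.
have Kf : kappa w A \is a fin_num.
  by rewrite ge0_fin_numE ?measure_ge0// (le_lt_trans (probability_le1 _ _)) ?ltry.
rewrite /ediv0 ifN; last by rewrite gt_eqF.
have Fplt : Fp w < +oo by rewrite -ge0_fin_numE.
have Fnlt : Fn w < +oo by rewrite -ge0_fin_numE.
have K0' := K0.
move: K0; rewrite -(fineK Fpf) -(fineK Fnf) -(fineK Kf).
set p := fine (Fp w); set n := fine (Fn w); set k := fine (kappa w A).
rewrite lte_fin => k0.
rewrite /= -EFinB -EFinM; congr EFin.
apply/eqP; rewrite eq_le; apply/andP; split; rewrite leNgt; apply/negP => lt.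
  have [r] := rat_in_itvoo lt; rewrite in_itv /= => /andP[h1 h2].
  apply: (nB r).1; split; first exact: Aw.
  split; first exact: h2.
  do 3 (split; first by []).
  rewrite -(fineK Fpf) -(fineK Fnf) -(fineK Kf).
  by rewrite -EFinB -EFinM lte_fin -ltr_pdivrMr.
have [r] := rat_in_itvoo lt; rewrite in_itv /= => /andP[h1 h2].
apply: (nB r).2; split; first exact: Aw.
split; first by rewrite ltrN2.
do 3 (split; first by []).
rewrite -(fineK Fpf) -(fineK Fnf) -(fineK Kf).
rewrite -EFinB -EFinM lte_fin mulNr ltrNr opprB -ltr_pdivlMr//.
Qed.
End core.



Lemma odd_split i : odd i -> i = (2 * i./2).+1.
Proof. by move=> oi; rewrite -{1}(odd_double_half i) oi add1n mul2n. Qed.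

Section concrete.
Local Open Scope ereal_scope.
Context d (Omega : measurableType d) (R : realType) (P : probability Omega R)
  dE (E : measurableType dE) (T : nat -> Omega -> \bar R) (Z : nat -> Omega -> E).
Hypothesis mT : forall i, measurable_fun setT (T i).
Hypothesis mZ : forall i, measurable_fun setT (Z i).
Hypothesis Zpair : forall k, Z (2 * k).+1 = Z (2 * k).+2.
Variables (M I : {fset nat}).
Hypothesis HM : forall i, i \in M -> odd i.
Variable ev : nat -> Omega -> Prop.
Hypothesis mev : forall i, measurable [set w | ev i w].

Definition gensE := [set S : set Omega | exists k (B : set E), measurable B /\
  S = [set w | ev (2*k).+1 w /\ B (Z (2*k).+2 w)]].
Definition Gg := gensE `|` null_sets P `|` RI_gens T Z I.
Definition Hgc := ZM_gens Z M `|` RI_gens T Z I.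
Definition Aev := [set w | (forall i, i \in M -> ev i w) /\
  (forall i, odd i -> i \notin M -> ~ ev i w)].

Let Xg := g_sigma_algebraType Gg.
Let Xh := g_sigma_algebraType Hgc.

Lemma RI_meas S : RI_gens T Z I S -> measurable S.
Proof.
case => [[B mB ->]|[i [iI [B mB ->]]]].
  by have := mQ mT I measurableT mB; rewrite setTI.
by have := mZ i measurableT mB; rewrite setTI.
Qed.

Lemma HgcM C : Hgc C -> measurable C.
Proof.
case => [[i [iM [B mB ->]]]|]; last exact: RI_meas.
by have := mZ i measurableT mB; rewrite setTI.
Qed.

Lemma GgM S : Gg S -> measurable S.
Proof.
case => [[[k [B [mB ->]]]|[mS _]]|]; [|by []|exact: RI_meas].
have := mZ (2*k).+2 measurableT mB; rewrite setTI => mZB.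
by have -> : [set w | ev (2 * k).+1 w /\ B (Z (2 * k).+2 w)] =
  [set w | ev (2 * k).+1 w] `&` (Z (2*k).+2 @^-1` B); [|exact: measurableI].
Qed.

Lemma GsM D : <<s Gg>> D -> measurable D.
Proof.
move=> HD; apply: (smallest_sub _ _ HD) => //; last exact: GgM.
exact: sigma_algebra_measurable.
Qed.

Lemma GsI D1 D2 : <<s Gg>> D1 -> <<s Gg>> D2 -> <<s Gg>> (D1 `&` D2).
Proof. exact: (@measurableI _ Xg). Qed.

Lemma ev_in k : <<s Gg>> [set w | ev (2*k).+1 w].
Proof.
apply: sub_sigma_algebra; left; left; exists k, setT; split => //.
by apply/seteqP; split => w /= => [h|[]].
Qed.

Lemma GsA : <<s Gg>> Aev.
Proof.
pose F i := if odd i then (if i \in M then [set w | ev i w] else ~` [set w | ev i w])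
  else setT.
have -> : Aev = \bigcap_i F i.
  apply/seteqP; split => w.
    move=> [h1 h2] i _; rewrite /F; case: ifPn => oi //.
    by case: ifPn => iM; [exact: h1|exact: h2].
  move=> h; split.
    by move=> i iM; have := h i Logic.I; rewrite /F HM// iM.
  by move=> i oi iM; have := h i Logic.I; rewrite /F oi (negbTE iM).
apply: (@bigcapT_measurable _ Xg) => i; rewrite /F.
case: ifPn => oi; last exact: (@measurableT _ Xg).
have ev_i : <<s Gg>> [set w | ev i w] by rewrite (odd_split oi); exact: ev_in.
case: ifPn => _ //; exact: (@measurableC _ Xg).
Qed.

Lemma HA C : <<s Hgc>> C -> <<s Gg>> (C `&` Aev).
Proof.
move=> HC; apply: (smallest_sub (G := Hgc) (X := [set C | <<s Gg>> (C `&` Aev)]) _ _ HC).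
  split.
  - by rewrite /= set0I; exact: (@measurable0 _ Xg).
  - move=> C' HC'; rewrite /= (_ : _ `&` _ = Aev `\` (C' `&` Aev)).
      exact: (@measurableD _ Xg) GsA HC'.
    by apply/seteqP; split => w /=; [move=> [[_ nC] Aw]; split => // -[]|
      move=> [Aw nC]; split => //; split => // Cw; apply: nC].
  - move=> F HF; rewrite /= setI_bigcupl.
    by apply: (@bigcupT_measurable _ Xg) => n; exact: HF.
move=> S [[i [iM [B mB ->]]]|RS].
  have oi := HM iM; move: iM; rewrite (odd_split oi) => iM.
  set k := i./2 in iM *; rewrite /mkset.
  rewrite (_ : _ `&` _ = [set w | ev (2*k).+1 w /\ B (Z (2*k).+2 w)] `&` Aev).
    apply: GsI; last exact: GsA.
    by apply: sub_sigma_algebra; left; left; exists k, B.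
  apply/seteqP; split => w /=.
    by move=> [ZB [h1 h2]]; split => //; split; [exact: h1|rewrite -Zpair].
  by move=> [[_ ZB] Aw]; split => //; rewrite Zpair.
by apply: GsI; [apply: sub_sigma_algebra; right|exact: GsA].
Qed.

Lemma GA D : <<s Gg>> D -> exists2 C, <<s Hgc>> C &
  P.-negligible (D `&` Aev `\` C `|` C `&` Aev `\` D).
Proof.
move=> HD; apply: (smallest_sub (X := [set D | exists2 C, <<s Hgc>> C &
  P.-negligible (D `&` Aev `\` C `|` C `&` Aev `\` D)]) _ _ HD).
  split.
  - exists set0; first exact: (@measurable0 _ Xh).
    by apply: (negligibleS _ (negligible_set0 P)) => w [[[]]|[[]]].
  - move=> D' [C HC ng]; exists (setT `\` C); first exact: (@measurableD _ Xh).
    apply: (negligibleS _ ng) => w [[[[_ nD] Aw] nC]|[[[_ nC] Aw] nD]].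
      by right; split => //; split => //; apply: contrapT => h; apply: nC; split.
    by left; split => //; split => //; apply: contrapT => h; apply: nD; split.
  - move=> F HF.
    have /choice[Cf HCf] : forall n, exists C, <<s Hgc>> C /\
        P.-negligible (F n `&` Aev `\` C `|` C `&` Aev `\` F n).
      by move=> n; have [C HC ng] := HF n; exists C.
    exists (\bigcup_n Cf n).
      by apply: (@bigcupT_measurable _ Xh) => n; exact: (HCf n).1.
    apply: (negligibleS _ (negligible_bigcup (fun n => (HCf n).2))).
    move=> w [[[[n _ Fw] Aw] nC]|[[[n _ Cw] Aw] nF]].
      exists n => //; left; split; first by split.
      by move=> Cw; apply: nC; exists n.
    exists n => //; right; split; first by split.
    by move=> Fw; apply: nF; exists n.
move=> S [[[k [B [mB ->]]]|[mS S0]]|RS].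
- case: (boolP ((2*k).+1 \in M)) => kM.
    exists (Z (2*k).+1 @^-1` B).
      by apply: sub_sigma_algebra; left; exists (2*k).+1; split => //; exists B.
    apply: (negligibleS _ (negligible_set0 P)) => w [[[[_ ZB] Aw] nC]|[[ZB Aw] nS]].
      by apply: nC; rewrite /= Zpair.
    by apply: nS; rewrite /mkset; split; [exact: Aw.1 _ kM|rewrite -Zpair].
  exists set0; first exact: (@measurable0 _ Xh).
  apply: (negligibleS _ (negligible_set0 P)) => w [[[[ev_w _] Aw] _]|[[[] _] _]].
  apply: (Aw.2 _ _ kM ev_w).
  by rewrite /= mul2n odd_double.
- exists set0; first exact: (@measurable0 _ Xh).
  apply: (negligibleS _ (ex_intro _ S (And3 mS S0 (@subset_refl _ S)))).
  by move=> w [[[Sw _] _]|[[[] _] _]].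
- exists S; first by apply: sub_sigma_algebra; right.
  by apply: (negligibleS _ (negligible_set0 P)) => w [[[Sw Aw] nS]|[[Sw Aw] nS]]; apply: nS.
Qed.

End concrete.

Unset Implicit Arguments.
Set Strict Implicit.

Theorem mainTheorem2 (d : measure_display) (Omega : measurableType d)
  (R : realType) (P : probability Omega R)
  (dE : measure_display) (E : measurableType dE)
  (T : nat -> Omega -> \bar R) (Z : nat -> Omega -> E)
  (Pcomplete : forall N : set Omega, P.-negligible N -> measurable N)
  (mT : forall i, measurable_fun setT (T i))
  (T_ge0 : forall i w, (0 <= T i w)%E)
  (mZ : forall i, measurable_fun setT (Z i))
  (Zpair : forall k, Z (2 * k).+1 = Z (2 * k).+2)
  (Tpair_le : forall k w, (T (2 * k).+1 w <= T (2 * k).+2 w)%E)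
  (Tpair_lt : forall k w, (T (2 * k).+2 w < +oo)%E ->
                          (T (2 * k).+1 w < T (2 * k).+2 w)%E)
  (count_fin : forall t : R, 0 <= t ->
     (\int[P]_w (\sum_(1 <= i <oo) ((T i w <= t%:E)%E%:R)%:E) < +oo)%E)
  (xi : Omega -> R) (xi_int : P.-integrable setT (EFin \o xi))
  (M I : {fset nat})
  (HM : forall i, i \in M -> odd i)
  (HI : forall i, i \in I -> (0 < i)%N)
  (kappa : Omega -> probability Omega R)
  (Hkappa : regular_cond_prob P (ZMRI T Z M I) kappa) :
  (forall t : R, 0 <= t -> forall Y : Omega -> R,
     cond_exp_version P (GRI P T Z I t) xi Y ->
     {ae P, forall w,
        ((\1_(A_ T M t) w)%:E * (Y w)%:E =
         (\1_(A_ T M t) w)%:E *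
         @ediv0 R (\int[kappa w]_x (xi x * \1_(A_ T M t) x)%:E)
                (\int[kappa w]_x (\1_(A_ T M t) x)%:E))%E}) /\
  (forall t : R, 0 < t -> forall Y : Omega -> R,
     cond_exp_version P (GmRI P T Z I t) xi Y ->
     {ae P, forall w,
        ((\1_(Am_ T M t) w)%:E * (Y w)%:E =
         (\1_(Am_ T M t) w)%:E *
         @ediv0 R (\int[kappa w]_x (xi x * \1_(Am_ T M t) x)%:E)
                (\int[kappa w]_x (\1_(Am_ T M t) x)%:E))%E}).
Proof.
have mevA (t : R) i : measurable [set w | (T i w <= t%:E < T i.+1 w)%E].
  rewrite (_ : [set w | _] = [set w | (T i w <= t%:E)%E] `&` [set w | (t%:E < T i.+1 w)%E]).
    apply: measurableI.
    - by have := emeasurable_fun_infty_c measurableT (mT i) t%:E; rewrite setTI.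
    - by have := emeasurable_fun_o_infty measurableT (mT i.+1) t%:E; rewrite setTI.
  by apply/seteqP; split => w /=; [move/andP|move=> [a b]; apply/andP].
have mevB (t : R) i : measurable [set w | (T i w < t%:E <= T i.+1 w)%E].
  rewrite (_ : [set w | _] = [set w | (T i w < t%:E)%E] `&` [set w | (t%:E <= T i.+1 w)%E]).
    apply: measurableI.
    - by have := emeasurable_fun_infty_o measurableT (mT i) t%:E; rewrite setTI.
    - by have := emeasurable_fun_c_infty measurableT (mT i.+1) t%:E; rewrite setTI.
  by apply/seteqP; split => w /=; [move/andP|move=> [a b]; apply/andP].
split.
- move=> t _ Y Yce.
  pose ev := fun i w => is_true (T i w <= t%:E < T i.+1 w)%E.
  have mev : forall i, measurable [set w | ev i w] := mevA t.
  apply: (@CoreT d Omega R P (Hgc T Z M I) kappa _ Hkappa (GRI P T Z I t) (A_ T M t)) => //.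
  - exact: HgcM.
  - exact: (GsM mT mZ mev).
  - exact: (@GsI _ _ _ P _ _ T Z I ev).
  - exact: (@GsA _ _ _ P _ _ T Z M I HM ev).
  - exact: (@HA _ _ _ P _ _ T Z Zpair M I HM ev).
  - exact: (@GA _ _ _ P _ _ T Z Zpair M I ev).
- move=> t _ Y Yce.
  pose ev := fun i w => is_true (T i w < t%:E <= T i.+1 w)%E.
  have mev : forall i, measurable [set w | ev i w] := mevB t.
  apply: (@CoreT d Omega R P (Hgc T Z M I) kappa _ Hkappa (GmRI P T Z I t) (Am_ T M t)) => //.
  - exact: HgcM.
  - exact: (GsM mT mZ mev).
  - exact: (@GsI _ _ _ P _ _ T Z I ev).
  - exact: (@GsA _ _ _ P _ _ T Z M I HM ev).
  - exact: (@HA _ _ _ P _ _ T Z Zpair M I HM ev).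
  - exact: (@GA _ _ _ P _ _ T Z Zpair M I ev).
Qed.
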